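(* Let $n\ge 1$, $1\le m\le n$, $\eta>0$, and let $f:\mathbb{R}^n\to\mathbb{R}$ belong to $\mathcal{F}_{\sigma,L}(\mathbb{R}^n)$ for some constants $0<\sigma\le L$, with minimizer ${\bm x}^*$. Define \[ \gamma=\frac{\sigma/L}{53}\left(\frac{1-\sqrt{1-\sigma/L}}{1+\sqrt{1-\sigma/L}}\right)^2,\qquad \varepsilon=\frac{8nL^2}{\sigma}\Big(1+\frac{n}{m\gamma}\Big)\eta^2, \] and \[ T_0=\left\lceil \frac{n}{m\gamma}\log\frac{(f({\bm x}_0)-f({\bm x}^* ))(1+\frac{n}{m\gamma})}{\varepsilon}\right\rceil . \] Let ${\bm x}_0,{\bm x}_1,\dots$ be the iterates of $\mathrm{BlockCD}[n,m]$ (described in the context) started at ${\bm x}_0$ with line-search accuracy $\eta$, using the deterministic pairwise comparison oracle. Then for every $T\ge T_0$, \[ \mathbb{E}[f({\bm x}_T)-f({\bm x}^* )]\le \varepsilon, \] where the expectation is over the random choice of coordinates made by the algorithm.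
   Context: $\|\cdot\|$ is the Euclidean norm. A function $f:\mathbb{R}^n\to\mathbb{R}$ is $\sigma$-strongly convex if $f({\bm y})\ge f({\bm x})+\nabla f({\bm x})^T({\bm y}-{\bm x})+\frac{\sigma}{2}\|{\bm x}-{\bm y}\|^2$ for all ${\bm x},{\bm y}$, and $L$-strongly smooth if $\|\nabla f({\bm x})-\nabla f({\bm y})\|\le L\|{\bm x}-{\bm y}\|$ for all ${\bm x},{\bm y}$; $\mathcal{F}_{\sigma,L}(\mathbb{R}^n)$ denotes the class of functions on $\mathbb{R}^n$ that are both $\sigma$-strongly convex and $L$-strongly smooth. The deterministic pairwise comparison (PC) oracle is the map $O_f({\bm x},{\bm y})=\mathrm{sign}\{f({\bm y})-f({\bm x})\}\in\{-1,+1\}$; the algorithm accesses $f$ only through this oracle. PC-based line search: given a point ${\bm x}$, a direction ${\bm d}$ and an accuracy, it approximately minimizes $\alpha\mapsto f({\bm x}+\alpha{\bm d})$ using only oracle calls: starting from $\alpha=0$ with brackets $\alpha^\pm=\pm1$ (one of which is reset to $0$ if the oracle comparisons at ${\bm x}\pm{\bm d}$ show $f$ decreases only on one side), it doubles each bracket endpoint $\alpha^\pm$ while $O_f({\bm x},{\bm x}+\alpha^\pm{\bm d})<0$, and then repeatedly compares $f$ at the current point ${\bm x}+\alpha{\bm d}$ with $f$ at the midpoints ${\bm x}+\frac12(\alpha+\alpha^\pm){\bm d}$, moving the current point to a midpoint with smaller value (and shrinking the bracket accordingly) or otherwise shrinking both brackets toward $\alpha$, until the bracket width is at most the accuracy;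 ''solving within accuracy $a$'' means the returned value lies within $a$ of the exact one-dimensional minimizer. $\mathrm{BlockCD}[n,m]$: input ${\bm x}_0\in\mathbb{R}^n$ and $\eta>0$. At iteration $t=0,1,\dots$: choose $m$ coordinates $i_1,\dots,i_m$ out of $\{1,\dots,n\}$ according to the uniform distribution; (direction estimate step) for each $k=1,\dots,m$ solve $\min_{\alpha\in\mathbb{R}} f({\bm x}_t+\alpha{\bm e}_{i_k})$ within accuracy $\eta/2$ by the PC-based line search, obtaining $\alpha_{t,i_k}$ (here ${\bm e}_i$ is the $i$-th unit basis vector); set ${\bm d}_t=\sum_{k=1}^m\alpha_{t,i_k}{\bm e}_{i_k}$, and if ${\bm d}_t={\bm 0}$ add $\eta/2$ to its $i_1$-th component; (search step) solve $\min_\beta f({\bm x}_t+\beta{\bm d}_t/\|{\bm d}_t\|)$ within accuracy $\eta$ by the PC-based line search, obtaining $\beta_t$; set ${\bm x}_{t+1}={\bm x}_t+\beta_t{\bm d}_t/\|{\bm d}_t\|$. *)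

(* Defs.v *)
From HB Require Import structures.
From mathcomp Require Import all_boot all_order all_algebra.
From mathcomp Require Import all_classical all_reals all_analysis.
Set Implicit Arguments. Unset Strict Implicit. Unset Printing Implicit Defensive.
Import Order.TTheory GRing.Theory Num.Theory numFieldNormedType.Exports.
Local Open Scope ring_scope.

Definition vdot (R : realType) (n : nat) (x y : 'rV[R]_n) : R :=
  \sum_(i < n) x 0 i * y 0 i.
Definition enorm (R : realType) (n : nat) (x : 'rV[R]_n) : R :=
  Num.sqrt (vdot x x).

Definition unitv (R : realType) (n : nat) (i : 'I_n) : 'rV[R]_n :=
  delta_mx 0 i.

Definition gradient (R : realType) (n : nat) (f : 'rV[R]_n -> R^o)
  (x : 'rV[R]_n) : 'rV[R]_n :=
  \row_(i < n) ('d f x (unitv R i)).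

Definition strongly_convex (R : realType) (n : nat) (sigma : R)
  (f : 'rV[R]_n -> R^o) : Prop :=
  (forall x, differentiable f x) /\
  forall x y : 'rV[R]_n,
    f x + vdot (gradient f x) (y - x) + sigma / 2 * enorm (x - y) ^+ 2 <= f y.

Definition strongly_smooth (R : realType) (n : nat) (L : R)
  (f : 'rV[R]_n -> R^o) : Prop :=
  (forall x, differentiable f x) /\
  forall x y : 'rV[R]_n,
    enorm (gradient f x - gradient f y) <= L * enorm (x - y).

Definition F_class (R : realType) (n : nat) (sigma L : R)
  (f : 'rV[R]_n -> R^o) : Prop :=
  strongly_convex sigma f /\ strongly_smooth L f.

(* A line-search routine ls : x -> d -> accuracy -> step "solves
   min_alpha f(x + alpha d) within accuracy a": its output lies within a of
   the exact one-dimensional minimizer (for d <> 0, a > 0). *)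
Definition line_search_accurate (R : realType) (n : nat)
  (f : 'rV[R]_n -> R^o) (ls : 'rV[R]_n -> 'rV[R]_n -> R -> R) : Prop :=
  forall (x d : 'rV[R]_n) (a : R), d != 0 -> 0 < a ->
    exists2 al : R, (forall b : R, f (x + al *: d) <= f (x + b *: d))
                    & `|ls x d a - al| <= a.

(* One iteration of BlockCD[n,m] with the chosen coordinates
   i_k = s (k-1), k = 1..m (s injective). *)
Definition bcd_step (R : realType) (n m : nat)
  (ls : 'rV[R]_n -> 'rV[R]_n -> R -> R) (eta : R)
  (s : {ffun 'I_m -> 'I_n}) (x : 'rV[R]_n) : 'rV[R]_n :=
  let cs := [seq s k | k <- enum 'I_m] in
  let d0 := \sum_(i <- cs) ls x (unitv R i) (eta / 2) *: unitv R i in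
  let d := if d0 == 0 then
             match ohead cs with
             | Some i1 => d0 + (eta / 2) *: unitv R i1
             | None => d0
             end
           else d0 in
  let u := (enorm d)^-1 *: d in
  x + ls x u eta *: u.

Definition bcd_iter (R : realType) (n m : nat)
  (ls : 'rV[R]_n -> 'rV[R]_n -> R -> R) (eta : R) (x0 : 'rV[R]_n)
  (ss : seq {ffun 'I_m -> 'I_n}) : 'rV[R]_n :=
  foldl (fun x s => bcd_step ls eta s x) x0 ss.

Definition coord_choice (n m : nat) : pred {ffun 'I_m -> 'I_n} :=
  [pred s : {ffun 'I_m -> 'I_n} | injectiveb (fun k : 'I_m => s k)].

(* Sample space of the first T iterations: T independent uniform choices. *)
Definition sample_space (n m T : nat) : pred {ffun 'I_T -> {ffun 'I_m -> 'I_n}} :=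
  [pred ss : {ffun 'I_T -> {ffun 'I_m -> 'I_n}} | [forall t : 'I_T, @coord_choice n m (ss t)]].

Definition bcd_expected_gap (R : realType) (n m : nat) (f : 'rV[R]_n -> R^o)
  (ls : 'rV[R]_n -> 'rV[R]_n -> R -> R) (eta : R) (x0 xstar : 'rV[R]_n)
  (T : nat) : R :=
  (#|@sample_space n m T|%:R)^-1 *
  \sum_(ss in @sample_space n m T)
     (f (bcd_iter ls eta x0 [seq ss t | t <- enum 'I_T]) - f xstar).

Definition gamma_const (R : realType) (sigma L : R) : R :=
  (sigma / L) / 53 *
  ((1 - Num.sqrt (1 - sigma / L)) / (1 + Num.sqrt (1 - sigma / L))) ^+ 2.

Definition eps_const (R : realType) (n m : nat) (sigma L eta : R) : R :=
  8 * n%:R * L ^+ 2 / sigma *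
  (1 + n%:R / (m%:R * gamma_const sigma L)) * eta ^+ 2.

(* Main.v *)
Require Import Defs.
From HB Require Import structures.
From mathcomp Require Import all_boot all_order all_algebra all_fingroup.
From mathcomp Require Import all_classical all_reals all_analysis.
From mathcomp Require Import ring lra.
Import Order.TTheory GRing.Theory Num.Theory numFieldNormedType.Exports.
Local Open Scope ring_scope.
Set Implicit Arguments. Unset Strict Implicit. Unset Printing Implicit Defensive.

Lemma vdotDr (R : realType) n (x y z : 'rV[R]_n) :
  vdot x (y + z) = vdot x y + vdot x z.
Proof. by rewrite /vdot -big_split /=; apply: eq_bigr => i _; rewrite !mxE mulrDr. Qed.

Lemma vdotZr (R : realType) n (x y : 'rV[R]_n) (a : R) :
  vdot x (a *: y) = a * vdot x y.
Proof. rewrite /vdot mulr_sumr; apply: eq_bigr => i _; rewrite !mxE; ring. Qed.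

Lemma vdotC (R : realType) n (x y : 'rV[R]_n) : vdot x y = vdot y x.
Proof. by rewrite /vdot; apply: eq_bigr => i _; rewrite mulrC. Qed.

Lemma vdotNr (R : realType) n (x y : 'rV[R]_n) : vdot x (- y) = - vdot x y.
Proof. by rewrite -scaleN1r vdotZr mulN1r. Qed.

Lemma vdotBr (R : realType) n (x y z : 'rV[R]_n) :
  vdot x (y - z) = vdot x y - vdot x z.
Proof. by rewrite vdotDr vdotNr. Qed.

Lemma vdotDl (R : realType) n (x y z : 'rV[R]_n) :
  vdot (y + z) x = vdot y x + vdot z x.
Proof. by rewrite vdotC vdotDr !(vdotC x). Qed.

Lemma vdotBl (R : realType) n (x y z : 'rV[R]_n) :
  vdot (y - z) x = vdot y x - vdot z x.
Proof. by rewrite vdotC vdotBr !(vdotC x). Qed.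

Lemma vdotZl (R : realType) n (x y : 'rV[R]_n) (a : R) :
  vdot (a *: y) x = a * vdot y x.
Proof. by rewrite vdotC vdotZr vdotC. Qed.

Lemma vdot_ge0 (R : realType) n (x : 'rV[R]_n) : 0 <= vdot x x.
Proof. by rewrite /vdot; apply: sumr_ge0 => i _; rewrite -expr2 sqr_ge0. Qed.

Lemma enorm_sq (R : realType) n (x : 'rV[R]_n) : enorm x ^+ 2 = vdot x x.
Proof. by rewrite /enorm sqr_sqrtr // vdot_ge0. Qed.

Lemma vdot_unitv (R : realType) n (x : 'rV[R]_n) i : vdot x (unitv R i) = x 0 i.
Proof.
rewrite /vdot (bigD1 i) //= big1 ?addr0; first by rewrite /unitv mxE !eqxx mulr1.
by move=> j /negbTE ji; rewrite /unitv mxE ji andbF mulr0.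
Qed.

Lemma vdot_young (R : realType) n (x y : 'rV[R]_n) (c : R) : 0 < c ->
  vdot x y <= vdot x x / (2 * c) + c / 2 * vdot y y.
Proof.
move=> c0; rewrite /vdot mulr_suml mulr_sumr -big_split /=.
apply: ler_sum => i _.
have h : 0 <= (x 0 i - c * y 0 i) ^+ 2 / (2 * c) by rewrite divr_ge0 // ?sqr_ge0 // mulr_ge0 // ltW.
suff -> : x 0 i * x 0 i / (2 * c) + c / 2 * (y 0 i * y 0 i) =
  x 0 i * y 0 i + (x 0 i - c * y 0 i) ^+ 2 / (2 * c) by rewrite lerDl.
field; by rewrite gt_eqF.
Qed.

Lemma vdot_eq0 (R : realType) n (x : 'rV[R]_n) : vdot x x = 0 -> x = 0.
Proof.
move=> /eqP; rewrite /vdot psumr_eq0 => [/allP h|i _]; last by rewrite -expr2 sqr_ge0.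
apply/rowP => i; rewrite mxE; have := h i (mem_index_enum i).
by rewrite /= mulf_eq0 orbb => /eqP.
Qed.

Lemma vdotNl (R : realType) n (x y : 'rV[R]_n) : vdot (- y) x = - vdot y x.
Proof. by rewrite vdotC vdotNr vdotC. Qed.

Lemma vdotNN (R : realType) n (x : 'rV[R]_n) : vdot (- x) (- x) = vdot x x.
Proof. by rewrite vdotNl vdotNr opprK. Qed.

Lemma lower_quad (R : realType) n (sigma : R) (f : 'rV[R]_n -> R^o) x v :
  strongly_convex sigma f ->
  f x + vdot (gradient f x) v + sigma / 2 * vdot v v <= f (x + v).
Proof.
case=> _ /(_ x (x + v)).
rewrite [x + v - x]addrAC subrr add0r enorm_sq.
rewrite opprD addrA subrr sub0r.
suff -> : vdot (- v) (- v) = vdot v v by [].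
by rewrite /vdot; apply: eq_bigr => i _; rewrite !mxE mulrNN.
Qed.

Lemma upper_quad (R : realType) n (sigma L : R) (f : 'rV[R]_n -> R^o) x v :
  0 < sigma -> sigma <= L -> F_class sigma L f ->
  f (x + v) <= f x + vdot (gradient f x) v + (L - sigma / 2) * vdot v v.
Proof.
move=> s0 sL [hc [_ hl]].
have L0 : 0 < L by apply: lt_le_trans sL.
have h1 := lower_quad (x + v) (- v) hc.
rewrite addrK vdotNN vdotNr vdotC in h1.
set y := x + v in h1 *.
have e : vdot v (gradient f y) =
  vdot (gradient f x) v + vdot (gradient f y - gradient f x) v.
  by rewrite vdotBl vdotC addrC subrK.
have hy := vdot_young (gradient f y - gradient f x) v L0.
have hlip : vdot (gradient f y - gradient f x) (gradient f y - gradient f x)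
   <= L ^+ 2 * vdot v v.
  rewrite -(enorm_sq (gradient f y - gradient f x)) -(enorm_sq v) -exprMn; have := hl y x.
  have -> : y - x = v by rewrite /y addrC addKr.
  move=> h.
  have e0 : 0 <= enorm (gradient f y - gradient f x) by apply: sqrtr_ge0.
  have e1 : 0 <= enorm v by apply: sqrtr_ge0.
  rewrite !expr2. by apply: ler_pM.
have : vdot (gradient f y - gradient f x) v <= L * vdot v v.
  apply: (le_trans hy).
  have -> : L * vdot v v = L ^+ 2 * vdot v v / (2 * L) + L / 2 * vdot v v.
    by field; rewrite gt_eqF.
  rewrite lerD2r ler_pM2r // invr_gt0 mulr_gt0 //.
move=> hb.
rewrite e in h1. move: h1 hb.
set A := vdot (gradient f x) v. set B := vdot (gradient f y - gradient f x) v.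
set V := vdot v v. set F := f y. move=> h1 hb.
have -> : (L - sigma / 2) * V = L * V - sigma / 2 * V by ring.
have hv : 0 <= V by apply: vdot_ge0.
lra.
Qed.

Lemma grad_gap (R : realType) n (sigma : R) (f : 'rV[R]_n -> R^o) x xs :
  0 < sigma -> strongly_convex sigma f ->
  2 * sigma * (f x - f xs) <= vdot (gradient f x) (gradient f x).
Proof.
move=> s0 hc; have := lower_quad x (xs - x) hc.
have -> : x + (xs - x) = xs by rewrite addrC subrK.
move=> h.
have hy := vdot_young (- gradient f x) (xs - x) s0.
rewrite vdotNN vdotNl in hy.
set G := vdot (gradient f x) (gradient f x) in hy *; set V := vdot (xs - x) _ in h hy *.
set D := vdot (gradient f x) (xs - x) in h hy *.
set K := G / (2 * sigma) in hy.
have h3 : f x - f xs <= K by lra.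
have -> : G = 2 * sigma * K by rewrite /K; field; rewrite gt_eqF.
by rewrite ler_pM2l // mulr_gt0.
Qed.

Lemma vdot_sumr (R : realType) n (I : finType) (x : 'rV[R]_n) (F : I -> 'rV[R]_n) :
  vdot x (\sum_(k : I) F k) = \sum_(k : I) vdot x (F k).
Proof.
rewrite /vdot exchange_big /=; apply: eq_bigr => j _.
by rewrite summxE mulr_sumr.
Qed.

Lemma sum_unitv_coord (R : realType) n m (s : 'I_m -> 'I_n) (c : 'I_m -> R) k :
  injective s ->
  (\sum_(l < m) c l *: unitv R (s l)) 0 (s k) = c k.
Proof.
move=> si; rewrite summxE (bigD1 k) //= big1 ?addr0.
  by rewrite !mxE !eqxx mulr1.
move=> l lk; rewrite !mxE /=.
case: eqP => [/si e|_]; last by rewrite mulr0.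
by rewrite e eqxx in lk.
Qed.

Lemma vdot_sum_unitv (R : realType) n m (s : 'I_m -> 'I_n) (c : 'I_m -> R) (y : 'rV[R]_n) :
  vdot y (\sum_(l < m) c l *: unitv R (s l)) = \sum_(l < m) c l * y 0 (s l).
Proof. by rewrite vdot_sumr; apply: eq_bigr => l _; rewrite vdotZr vdot_unitv. Qed.

Lemma vdot_sum_unitv2 (R : realType) n m (s : 'I_m -> 'I_n) (c : 'I_m -> R) :
  injective s ->
  vdot (\sum_(l < m) c l *: unitv R (s l)) (\sum_(l < m) c l *: unitv R (s l))
  = \sum_(l < m) c l ^+ 2.
Proof.
move=> si; rewrite vdot_sum_unitv; apply: eq_bigr => l _.
by rewrite sum_unitv_coord // expr2.
Qed.

Lemma enorm_neq0 (R : realType) n (d : 'rV[R]_n) : d != 0 -> enorm d != 0.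
Proof.
move=> d0; apply/negP => /eqP e; move/negP: d0; apply; apply/eqP.
apply: vdot_eq0; move: e; rewrite /enorm => /eqP; rewrite sqrtr_eq0 => h.
by apply/eqP; rewrite eq_le h vdot_ge0.
Qed.

Lemma key_scalar (R : realType) (sg M a dl G : R) : 0 < sg -> sg <= M ->
  4 * M * G * a + 4 * M * sg * a ^+ 2 + G ^+ 2 <= 0 ->
  16 * M * (a + dl) * G + 2 * M * sg * (a + dl) ^+ 2 + G ^+ 2 <= 64 * M ^+ 2 * dl ^+ 2.
Proof.
move=> s0 sM h.
have M0 : 0 < M by apply: lt_le_trans sM.
have F2 : 0 <= 2 * (G - 4 * M * dl) ^+ 2 by rewrite mulr_ge0 // sqr_ge0.
have P0 : 0 <= 2 * M * sg by rewrite !mulr_ge0 // ltW.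
have F3 := mulr_ge0 P0 (sqr_ge0 (a - dl)).
have P1 : 0 <= M * (M - sg) by rewrite mulr_ge0 ?subr_ge0 // ltW.
have F4 := mulr_ge0 P1 (sqr_ge0 dl).
nra.
Qed.

Lemma vdot_unitv_self (R : realType) n (i : 'I_n) : vdot (unitv R i) (unitv R i) = 1.
Proof. by rewrite vdot_unitv /unitv mxE !eqxx. Qed.

Lemma coord_min (R : realType) n (sigma L : R) (f : 'rV[R]_n -> R^o) x i a :
  0 < sigma -> sigma <= L -> F_class sigma L f ->
  (forall b, f (x + a *: unitv R i) <= f (x + b *: unitv R i)) ->
  4 * (L - sigma / 2) * gradient f x 0 i * a + 4 * (L - sigma / 2) * (sigma / 2) * a ^+ 2
   + gradient f x 0 i ^+ 2 <= 0.
Proof.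
move=> s0 sL hF hmin; set M := L - sigma / 2; set G := gradient f x 0 i.
have M0 : 0 < M by rewrite /M; lra.
have hl := lower_quad x (a *: unitv R i) hF.1.
rewrite vdotZr vdot_unitv vdotZr vdotZl vdot_unitv_self mulr1 in hl.
pose b := - G / (2 * M).
have hu := upper_quad x (b *: unitv R i) s0 sL hF.
rewrite vdotZr vdot_unitv vdotZr vdotZl vdot_unitv_self mulr1 -/G -/M in hu.
have hm := hmin b.
rewrite -/G -/M in hl.
have e : b * G + M * (b * b) = - (G ^+ 2 / (4 * M)) by rewrite /b; field; rewrite gt_eqF.
have h2 : a * G + sigma / 2 * (a * a) <= - (G ^+ 2 / (4 * M)) by lra.
have := ler_wpM2l (ltW (mulr_gt0 (ltr0n R 4) M0)) h2.
have -> : 4 * M * - (G ^+ 2 / (4 * M)) = - G ^+ 2 by field; rewrite gt_eqF.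
move=> h3.
have -> : 4 * M * G * a + 4 * M * (sigma / 2) * a ^+ 2 =
  4 * M * (a * G + sigma / 2 * (a * a)) by ring.
lra.
Qed.

Lemma term_bound (R : realType) (sg M a c G : R) : 0 < sg -> sg <= M ->
  4 * M * G * a + 4 * M * sg * a ^+ 2 + G ^+ 2 <= 0 ->
  sg / (8 * M) * (c * G) + M * (sg / (8 * M)) ^+ 2 * c ^+ 2
  <= - (sg / (128 * M ^+ 2) * G ^+ 2) + sg / 2 * (c - a) ^+ 2.
Proof.
move=> s0 sM h.
have M0 : 0 < M by apply: lt_le_trans sM.
have := key_scalar (c - a) s0 sM h.
have -> : a + (c - a) = c by rewrite addrC subrK.
move=> hk.
have k0 : 0 <= sg / (128 * M ^+ 2) by rewrite divr_ge0 ?mulr_ge0 // ltW // exprn_gt0.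
have := ler_wpM2l k0 hk.
have -> : sg / (128 * M ^+ 2) * (16 * M * c * G + 2 * M * sg * c ^+ 2 + G ^+ 2)
  = sg / (8 * M) * (c * G) + M * (sg / (8 * M)) ^+ 2 * c ^+ 2 + sg / (128 * M ^+ 2) * G ^+ 2.
  by field; rewrite gt_eqF.
have -> : sg / (128 * M ^+ 2) * (64 * M ^+ 2 * (c - a) ^+ 2) = sg / 2 * (c - a) ^+ 2.
  by field; rewrite gt_eqF.
lra.
Qed.

Lemma zero_deriv (R : realType) n (sigma L : R) (f : 'rV[R]_n -> R^o) x u bs :
  0 < sigma -> sigma <= L -> F_class sigma L f ->
  (forall b, f (x + bs *: u) <= f (x + b *: u)) ->
  vdot (gradient f (x + bs *: u)) u = 0.
Proof.
move=> s0 sL hF hmin; set y := x + bs *: u; set c0 := vdot _ u.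
set M := L - sigma / 2.
have M0 : 0 < M by rewrite /M; lra.
have V0 := vdot_ge0 u; set V := vdot u u in V0 *.
pose r := - c0 / (2 * M * V + 1).
have hu := upper_quad y (r *: u) s0 sL hF.
rewrite vdotZr vdotZr vdotZl -/c0 -/M -/V in hu.
have : f y <= f (y + r *: u) by rewrite /y -addrA -scalerDl; apply: hmin.
move=> h2.
have e0 : 0 < 2 * M * V + 1 by nra.
have h3 : 0 <= r * c0 + M * (r * (r * V)) by lra.
have e : r * c0 + M * (r * (r * V)) =
  - c0 ^+ 2 * (M * V + 1) / (2 * M * V + 1) ^+ 2.
  by rewrite /r; field; rewrite gt_eqF.
rewrite e in h3.
have e1 : 0 < (M * V + 1) / (2 * M * V + 1) ^+ 2.
  rewrite divr_gt0 ?exprn_gt0 //; nra.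
have h4 : c0 ^+ 2 * ((M * V + 1) / (2 * M * V + 1) ^+ 2) <= 0.
  by move: h3; rewrite mulNr mulNr oppr_ge0 mulrA.
rewrite pmulr_lle0 // in h4.
by apply/eqP; rewrite -sqrf_eq0 eq_le h4 sqr_ge0.
Qed.

Lemma step_decrease (R : realType) n m (sigma L eta : R) (f : 'rV[R]_n -> R^o)
  (ls : 'rV[R]_n -> 'rV[R]_n -> R -> R) x (s : 'I_m -> 'I_n) (a c : 'I_m -> R) :
  0 < sigma -> sigma <= L -> 0 < eta -> F_class sigma L f ->
  line_search_accurate f ls -> injective s ->
  (forall k b, f (x + a k *: unitv R (s k)) <= f (x + b *: unitv R (s k))) ->
  (forall k, `|c k - a k| <= eta) ->
  \sum_(l < m) c l *: unitv R (s l) != 0 ->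
  f (x + ls x ((enorm (\sum_(l < m) c l *: unitv R (s l)))^-1 *:
                 (\sum_(l < m) c l *: unitv R (s l))) eta *:
           ((enorm (\sum_(l < m) c l *: unitv R (s l)))^-1 *:
                 (\sum_(l < m) c l *: unitv R (s l))))
  <= f x - sigma / 2 / (128 * (L - sigma / 2) ^+ 2) *
           \sum_(k < m) gradient f x 0 (s k) ^+ 2
       + sigma / 2 / 2 * (m%:R * eta ^+ 2) + (L - sigma / 2) * eta ^+ 2.
Proof.
move=> s0 sL e0 hF hls si hmin hc.
set d := \sum_(l < m) _; set M := L - sigma / 2; set sg := sigma / 2 => d0.
have M0 : 0 < M by rewrite /M; lra.
have sg0 : 0 < sg by rewrite /sg; lra.
have sgM : sg <= M by rewrite /sg /M; lra.
have nd := enorm_neq0 d0.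
set k := (enorm d)^-1; set u := k *: d.
have k0 : k != 0 by rewrite invr_eq0.
have u0 : u != 0 by rewrite scaler_eq0 negb_or k0 d0.
have [bs hbs hls1] := hls x u eta u0 e0.
set y := x + bs *: u.
have zd := zero_deriv s0 sL hF hbs.
have Vu : vdot u u = 1.
  rewrite /u vdotZr vdotZl -(enorm_sq d) /k.
  by rewrite mulrA -expr2 -exprMn mulVf ?expr1n.
set r := ls x u eta - bs.
have -> : x + ls x u eta *: u = y + r *: u.
  by rewrite /y /r -addrA -scalerDl [bs + _]addrC subrK.
have h1 := upper_quad y (r *: u) s0 sL hF.
rewrite vdotZr zd mulr0 addr0 vdotZr vdotZl Vu mulr1 -/M in h1.
have hr : r * r <= eta ^+ 2.
  rewrite -expr2 -real_normK ?num_real //; rewrite lerXn2r ?nnegrE //; lra.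
have h2 : f (y + r *: u) <= f y + M * eta ^+ 2.
  apply: (le_trans h1); rewrite lerD2l ler_pM2l //.
set t := sg / (8 * M).
have h3 : f y <= f (x + t *: d).
  have -> : t *: d = (t * enorm d) *: u.
    by rewrite /u scalerA -mulrA mulfV // mulr1.
  exact: hbs.
set S1 := \sum_(l < m) c l * gradient f x 0 (s l).
set S2 := \sum_(l < m) c l ^+ 2.
have h4 : f (x + t *: d) <= f x + t * S1 + M * (t * (t * S2)).
  have := upper_quad x (t *: d) s0 sL hF.
  by rewrite vdotZr vdotZr vdotZl -/M {2 3 4}/d vdot_sum_unitv vdot_sum_unitv2.
have h5 : t * S1 + M * (t * (t * S2)) <=
   - (sg / (128 * M ^+ 2) * \sum_(k0 < m) gradient f x 0 (s k0) ^+ 2)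
   + sg / 2 * (m%:R * eta ^+ 2).
  have -> : t * S1 + M * (t * (t * S2)) =
     \sum_(l < m) (t * (c l * gradient f x 0 (s l)) + M * t ^+ 2 * c l ^+ 2).
    rewrite big_split /= /S1 /S2 !mulr_sumr; congr (_ + _).
    by apply: eq_bigr => l _; rewrite expr2; ring.
  have -> : m%:R * eta ^+ 2 = \sum_(l < m) eta ^+ 2.
    by rewrite sumr_const card_ord mulr_natl.
  rewrite mulr_sumr mulr_sumr -sumrN -big_split /=.
  apply: ler_sum => l _.
  have tb := term_bound (c l) sg0 sgM (coord_min s0 sL hF (hmin l)).
  apply: (le_trans tb).
  rewrite lerD2l ler_pM2l ?divr_gt0 //.
  rewrite -real_normK ?num_real // lerXn2r ?nnegrE //; lra.
lra.
Qed.

Lemma unitv_neq0 (R : realType) n (i : 'I_n) : unitv R i != 0.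
Proof.
apply/negP => /eqP /matrixP /(_ 0 i); rewrite /unitv !mxE !eqxx /=.
by move/eqP; rewrite oner_eq0.
Qed.

Lemma bcd_step_bound (R : realType) n m (sigma L eta : R) (f : 'rV[R]_n -> R^o)
  (ls : 'rV[R]_n -> 'rV[R]_n -> R -> R) x (s : {ffun 'I_m.+1 -> 'I_n}) :
  0 < sigma -> sigma <= L -> 0 < eta -> F_class sigma L f ->
  line_search_accurate f ls -> @coord_choice n m.+1 s ->
  f (bcd_step ls eta s x)
  <= f x - sigma / 2 / (128 * (L - sigma / 2) ^+ 2) *
           \sum_(k < m.+1) gradient f x 0 (s k) ^+ 2
       + sigma / 2 / 2 * (m.+1%:R * eta ^+ 2) + (L - sigma / 2) * eta ^+ 2.
Proof.
move=> s0 sL e0 hF hls /injectiveP si.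
have e20 : 0 < eta / 2 by lra.
have [a ha hc] := fin_all_exists2 (fun k => hls x (unitv R (s k)) (eta / 2) (unitv_neq0 _ _) e20).
pose al k := ls x (unitv R (s k)) (eta / 2).
have d0E : \sum_(i <- [seq s k | k <- enum 'I_m.+1]) ls x (unitv R i) (eta / 2) *: unitv R i
   = \sum_(k < m.+1) al k *: unitv R (s k).
  by rewrite big_map big_enum.
rewrite /bcd_step d0E enum_ordSl /=.
set d0 := \sum_(k < m.+1) _.
case: ifP => [/eqP d00|d00].
  pose c k := al k + (k == ord0)%:R * (eta / 2).
  have dE : d0 + eta / 2 *: unitv R (s ord0) = \sum_(k < m.+1) c k *: unitv R (s k).
    rewrite /c; under eq_bigr do rewrite scalerDl.
    rewrite big_split /= -/d0; congr (_ + _).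
    rewrite (bigD1 ord0) //= ?eqxx mul1r big1 ?addr0 //.
    by move=> k /negbTE ->; rewrite mul0r scale0r.
  have nz : \sum_(k < m.+1) c k *: unitv R (s k) != 0.
    by rewrite -dE d00 add0r scaler_eq0 negb_or unitv_neq0 andbT gt_eqF.
  rewrite dE.
  apply: step_decrease => //.
  - move=> k; rewrite /c /al.
    have := hc k; case: (k == ord0) => /=; rewrite ?mul1r ?mul0r ?addr0.
      move=> h; rewrite addrAC.
      have h2 := ler_normD (ls x (unitv R (s k)) (eta / 2) - a k) (eta / 2).
      rewrite (ger0_norm (ltW e20)) in h2; lra.
    by move=> h; apply: le_trans h _; lra.
apply: step_decrease => //.
- by move=> k; apply: le_trans (hc k) _; lra.
- by rewrite d00.
Qed.

Definition cnt_fix n m (k : 'I_m) (i : 'I_n) : nat :=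
  #|[pred s : {ffun 'I_m -> 'I_n} | @coord_choice n m s && (s k == i)]|.

Lemma cnt_fix_le n m (k : 'I_m) (i j : 'I_n) : (cnt_fix k i <= cnt_fix k j)%N.
Proof.
rewrite /cnt_fix.
pose phi := fun s : {ffun 'I_m -> 'I_n} => [ffun l => tperm i j (s l)].
have phiK : involutive phi.
  by move=> s; apply/ffunP => l; rewrite !ffunE tpermK.
rewrite -(card_imset _ (inv_inj phiK)).
apply: subset_leq_card; apply/fintype.subsetP => _ /imsetP [s /andP [hs /eqP hk] ->].
rewrite inE /= /phi ffunE hk tpermL eqxx andbT.
apply/injectiveP => l1 l2; rewrite !ffunE => /perm_inj.
by move/injectiveP: hs; apply.
Qed.

Lemma cnt_fixE n m (k : 'I_m) (i : 'I_n) :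
  cnt_fix k i = (\sum_(s in @coord_choice n m) (s k == i))%N.
Proof.
rewrite /cnt_fix -sum1_card [LHS]big_mkcond [RHS]big_mkcond /=.
by apply: eq_bigr => s _; rewrite !inE /= /coord_choice /=; case: (injectiveb _); case: (_ == _).
Qed.

Lemma cnt_fix_sum n m (k : 'I_m) :
  (\sum_(i < n) cnt_fix k i = #|@coord_choice n m|)%N.
Proof.
under eq_bigr do rewrite cnt_fixE.
rewrite exchange_big /= -sum1_card; apply: eq_bigr => s hs.
rewrite (bigD1 (s k)) //= eqxx big1 ?addn0 //.
by move=> i /negbTE; rewrite eq_sym => ->.
Qed.

Lemma cnt_fix_const n m (k : 'I_m) (i : 'I_n) :
  (n * cnt_fix k i = #|@coord_choice n m|)%N.
Proof.
rewrite -(@cnt_fix_sum n m k) -[n in (n * _)%N]card_ord -sum_nat_const.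
apply: eq_bigr => j _; apply/eqP; rewrite eqn_leq !cnt_fix_le.
done.
Qed.

Lemma avg_coord (R : realType) n m (h : 'I_n -> R) : (0 < n)%N ->
  \sum_(s in @coord_choice n m) \sum_(k < m) h (s k)
  = m%:R * #|@coord_choice n m|%:R / n%:R * \sum_(i < n) h i.
Proof.
move=> n0.
rewrite exchange_big /=.
have e : forall k : 'I_m, \sum_(s in @coord_choice n m) h (s k)
   = #|@coord_choice n m|%:R / n%:R * \sum_(i < n) h i.
  move=> k.
  have -> : \sum_(s in @coord_choice n m) h (s k) =
     \sum_(s in @coord_choice n m) \sum_(i < n) (s k == i)%:R * h i.
    apply: eq_bigr => s _; rewrite (bigD1 (s k)) //= eqxx mul1r big1 ?addr0 //.
    by move=> i /negbTE; rewrite eq_sym => ->; rewrite mul0r.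
  rewrite exchange_big /= mulr_sumr; apply: eq_bigr => i _.
  rewrite -mulr_suml; congr (_ * _).
  have -> : \sum_(s in @coord_choice n m) ((s k == i)%:R : R) = (cnt_fix k i)%:R.
    rewrite cnt_fixE natr_sum; apply: eq_bigr => s _.
    by case: (_ == _).
  rewrite -(@cnt_fix_const n m k i) natrM mulrAC mulfV ?mul1r //.
  by rewrite pnatr_eq0 -lt0n.
rewrite (eq_bigr _ (fun k _ => e k)) sumr_const card_ord mulr_natl.
by rewrite -mulr_natl -[_ *+ m]mulr_natl; ring.
Qed.

Definition fcons (C : finType) T (c : C) (g : {ffun 'I_T -> C}) : {ffun 'I_T.+1 -> C} :=
  [ffun i => if unlift ord0 i is Some j then g j else c].

Lemma fcons_bij (C : finType) T :
  bijective (fun p : C * {ffun 'I_T -> C} => fcons p.1 p.2).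
Proof.
exists (fun ss : {ffun 'I_T.+1 -> C} => (ss ord0, [ffun j => ss (lift ord0 j)])).
  case=> c g /=; congr (_, _); first by rewrite ffunE unlift_none.
  by apply/ffunP => j; rewrite !ffunE liftK.
move=> ss; apply/ffunP => i; rewrite !ffunE.
by case: unliftP => [j ->|->]; rewrite ?ffunE.
Qed.

Lemma sum_peel (R : realType) (C : finType) T (P : pred C) (F : {ffun 'I_T.+1 -> C} -> R) :
  \sum_(ss : {ffun 'I_T.+1 -> C} | [forall t, P (ss t)]) F ss =
  \sum_(c | P c) \sum_(g : {ffun 'I_T -> C} | [forall t, P (g t)]) F (fcons c g).
Proof.
rewrite pair_big /= (reindex _ (onW_bij _ (@fcons_bij C T))) /=.
apply: eq_bigl => -[c g] /=.
apply/forallP/andP => [h|[hc /forallP hg] i].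
  split; first by have := h ord0; rewrite ffunE unlift_none.
  by apply/forallP => j; have := h (lift ord0 j); rewrite ffunE liftK.
by rewrite ffunE; case: unliftP => [j _|_].
Qed.

Lemma map_fcons (C : finType) T (c : C) (g : {ffun 'I_T -> C}) :
  [seq fcons c g t | t <- enum 'I_T.+1] = c :: [seq g t | t <- enum 'I_T].
Proof.
rewrite enum_ordSl /= ffunE unlift_none -map_comp; congr (_ :: _).
by apply: eq_map => j /=; rewrite ffunE liftK.
Qed.

Definition Ssum (R : realType) n m (f : 'rV[R]_n -> R^o)
  (ls : 'rV[R]_n -> 'rV[R]_n -> R -> R) (eta : R) (xstar : 'rV[R]_n) T x : R :=
  \sum_(ss in @sample_space n m T)
     (f (bcd_iter ls eta x [seq ss t | t <- enum 'I_T]) - f xstar).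

Lemma Ssum_succ (R : realType) n m (f : 'rV[R]_n -> R^o) ls (eta : R) xstar T x :
  Ssum m f ls eta xstar T.+1 x =
  \sum_(c in @coord_choice n m) Ssum m f ls eta xstar T (bcd_step ls eta c x).
Proof.
rewrite /Ssum (eq_bigl (fun ss : {ffun 'I_T.+1 -> _} => [forall t, @coord_choice n m (ss t)])) //.
rewrite sum_peel; apply: eq_bigr => c _.
apply: eq_big => [g|g _]; first by [].
by rewrite map_fcons.
Qed.

Lemma card_succ (R : realType) n m T :
  (#|@sample_space n m T.+1|%:R : R) = #|@coord_choice n m|%:R * #|@sample_space n m T|%:R.
Proof.
rewrite -!sum1_card !natr_sum.
rewrite (eq_bigl (fun ss : {ffun 'I_T.+1 -> _} => [forall t, @coord_choice n m (ss t)])) //.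
rewrite sum_peel mulr_suml; apply: eq_big => [c|c _]; first by [].
by rewrite mul1r; apply: eq_bigr.
Qed.

Lemma Ssum_0 (R : realType) n m (f : 'rV[R]_n -> R^o) ls (eta : R) xstar x :
  Ssum m f ls eta xstar 0 x = #|@sample_space n m 0|%:R * (f x - f xstar).
Proof.
rewrite /Ssum -sum1_card natr_sum mulr_suml; apply: eq_bigr => ss _.
have -> : enum 'I_0 = [::] by apply: size0nil; rewrite size_enum_ord.
by rewrite mul1r.
Qed.

Lemma Ssum_bound (R : realType) n m (f : 'rV[R]_n -> R^o) ls (eta : R) xstar (q N : R) :
  (forall x, \sum_(c in @coord_choice n m) (f (bcd_step ls eta c x) - f xstar)
       <= #|@coord_choice n m|%:R * (q * (f x - f xstar) + N)) ->
  0 <= q -> 0 <= N ->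
  forall T x, Ssum m f ls eta xstar T x <=
    #|@sample_space n m T|%:R * (q ^+ T * (f x - f xstar) + N * \sum_(j < T) q ^+ j).
Proof.
move=> hstep q0 N0; elim=> [|T IH] x.
  by rewrite Ssum_0 big_ord0 mulr0 addr0 expr0 mul1r.
rewrite Ssum_succ card_succ.
apply: le_trans (ler_sum _ (fun c _ => IH (bcd_step ls eta c x))) _.
set CT := (#|@sample_space n m T|%:R : R).
have CT0 : 0 <= CT by rewrite /CT ler0n.
rewrite -mulr_sumr big_split /= -mulr_sumr sumr_const.
have hs := hstep x.
set Sg := \sum_(c in _) _ in hs *.
set CC := (#|@coord_choice n m|%:R : R) in hs *.
rewrite -/CC.
have qT0 : 0 <= q ^+ T by rewrite exprn_ge0.
have hs2 : q ^+ T * Sg <= q ^+ T * (CC * (q * (f x - f xstar) + N)) by rewrite ler_wpM2l.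
rewrite -[_ *+ #|_|]mulr_natl -/CC [CC * CT]mulrC -mulrA ler_wpM2l //.
rewrite big_ord_recr /= exprSr.
set B := \sum_(i < T) q ^+ i.
have -> : CC * (q ^+ T * q * (f x - f xstar) + N * (B + q ^+ T)) =
  q ^+ T * (CC * (q * (f x - f xstar) + N)) + CC * (N * B) by ring.
have -> : CC * (N * B) = N * B * CC by ring.
by rewrite lerD2r.
Qed.

Lemma avg_step (R : realType) n m (sigma L eta : R) (f : 'rV[R]_n -> R^o)
  (ls : 'rV[R]_n -> 'rV[R]_n -> R -> R) xstar x :
  (0 < n)%N -> 0 < sigma -> sigma <= L -> 0 < eta -> F_class sigma L f ->
  line_search_accurate f ls ->
  \sum_(c in @coord_choice n m.+1) (f (bcd_step ls eta c x) - f xstar)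
  <= #|@coord_choice n m.+1|%:R *
     ((1 - sigma / 2 / (128 * (L - sigma / 2) ^+ 2) * (m.+1%:R / n%:R) * (2 * sigma))
        * (f x - f xstar)
      + (sigma / 2 / 2 * (m.+1%:R * eta ^+ 2) + (L - sigma / 2) * eta ^+ 2)).
Proof.
move=> n0 s0 sL e0 hF hls.
set kap := sigma / 2 / (128 * (L - sigma / 2) ^+ 2).
set N := sigma / 2 / 2 * (m.+1%:R * eta ^+ 2) + (L - sigma / 2) * eta ^+ 2.
set Fx := f x - f xstar.
have kap0 : 0 <= kap by rewrite /kap divr_ge0 ?mulr_ge0 ?exprn_ge0 //; lra.
have h1 : \sum_(c in @coord_choice n m.+1) (f (bcd_step ls eta c x) - f xstar)
  <= \sum_(c in @coord_choice n m.+1)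
        (Fx + N - kap * \sum_(k < m.+1) gradient f x 0 (c k) ^+ 2).
  apply: ler_sum => c hc.
  have := bcd_step_bound x s0 sL e0 hF hls hc; rewrite -/kap /N /Fx; lra.
apply: (le_trans h1).
rewrite sumrB -mulr_sumr (@avg_coord R n m.+1 (fun i => gradient f x 0 i ^+ 2) n0) /=.
rewrite sumr_const -[_ *+ #|_|]mulr_natl.
set CC := (#|@coord_choice n m.+1|%:R : R).
have hg := grad_gap x xstar s0 hF.1; rewrite -/Fx in hg.
have -> : \sum_(i < n) gradient f x 0 i ^+ 2 = vdot (gradient f x) (gradient f x).
  by rewrite /vdot; apply: eq_bigr => i _; rewrite expr2.
set G := vdot _ _ in hg *.
have CC0 : 0 <= CC by rewrite /CC ler0n.
have mn : 0 <= m.+1%:R / (n%:R : R) by rewrite divr_ge0 ?ler0n.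
have := ler_wpM2l (mulr_ge0 (mulr_ge0 kap0 mn) CC0) hg.
move=> h2.
have -> : CC * ((1 - kap * (m.+1%:R / n%:R) * (2 * sigma)) * Fx + N) =
   CC * (Fx + N) - kap * (m.+1%:R / n%:R) * CC * (2 * sigma * Fx) by ring.
have -> : kap * (m.+1%:R * CC / n%:R * G) = kap * (m.+1%:R / n%:R) * CC * G by ring.
lra.
Qed.

Lemma gamma_bound (R : realType) (sigma L : R) : 0 < sigma -> sigma <= L ->
  0 < gamma_const sigma L /\
  gamma_const sigma L <= sigma ^+ 2 / (128 * (L - sigma / 2) ^+ 2).
Proof.
move=> s0 sL.
have L0 : 0 < L by apply: lt_le_trans sL.
rewrite /gamma_const; set q0 := sigma / L; set w := Num.sqrt (1 - q0).
have q00 : 0 < q0 by rewrite divr_gt0.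
have q01 : q0 <= 1 by rewrite ler_pdivrMr // mul1r.
have w0 : 0 <= w by apply: sqrtr_ge0.
have w2 : w ^+ 2 = 1 - q0 by rewrite sqr_sqrtr // subr_ge0.
have w1 : w < 1 by rewrite ltNge; apply/negP => h; nra.
have q0E : q0 = 1 - w ^+ 2 by rewrite w2; ring.
have e1 : (1 - w) / (1 + w) = q0 / (1 + w) ^+ 2.
  rewrite [q0 in RHS]q0E; field; rewrite gt_eqF //; lra.
have hw : 0 < 1 + w ^+ 2 by rewrite w2; lra.
set t := (1 - w) / (1 + w).
have t0 : 0 <= t by rewrite /t divr_ge0 //; lra.
have tb : t <= q0 / (1 + w ^+ 2).
  rewrite /t e1 ler_pdivrMr ?exprn_gt0 //; last by lra.
  rewrite mulrAC ler_pdivlMr // ler_wpM2l //; first by lra.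
  by rewrite expr2; nra.
split.
  have t1 : 0 < t by rewrite /t divr_gt0 //; lra.
  by rewrite mulr_gt0 ?exprn_gt0 // divr_gt0.
have tb2 : t ^+ 2 <= (q0 / (1 + w ^+ 2)) ^+ 2.
  by rewrite lerXn2r // nnegrE divr_ge0 //; lra.
have -> : sigma ^+ 2 / (128 * (L - sigma / 2) ^+ 2) = 1 / 32 * (q0 / (1 + w ^+ 2)) ^+ 2.
  rewrite w2 /q0; field.
  by rewrite !gt_eqF //; lra.
apply: le_trans (_ : q0 / 53 * (q0 / (1 + w ^+ 2)) ^+ 2 <= _).
  by rewrite ler_wpM2l // divr_ge0 //; lra.
rewrite ler_wpM2r ?exprn_ge0 ?divr_ge0 //; try lra.
Qed.

Lemma geom_bound (R : realType) (rho : R) T : 0 < rho -> rho <= 1 ->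
  rho * \sum_(j < T) (1 - rho) ^+ j <= 1.
Proof.
move=> r0 r1.
have : rho * \sum_(j < T) (1 - rho) ^+ j = 1 - (1 - rho) ^+ T.
  elim: T => [|T IH]; first by rewrite big_ord0 mulr0 expr0 subrr.
  by rewrite big_ord_recr /= mulrDr IH exprSr; ring.
move=> ->; rewrite lerBlDr lerDl exprn_ge0 //; lra.
Qed.

Lemma avg_step' (R : realType) n m (sigma L eta : R) (f : 'rV[R]_n -> R^o)
  (ls : 'rV[R]_n -> 'rV[R]_n -> R -> R) xstar x :
  (0 < n)%N -> (0 < m)%N -> 0 < sigma -> sigma <= L -> 0 < eta -> F_class sigma L f ->
  line_search_accurate f ls ->
  \sum_(c in @coord_choice n m) (f (bcd_step ls eta c x) - f xstar)
  <= #|@coord_choice n m|%:R *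
     ((1 - sigma / 2 / (128 * (L - sigma / 2) ^+ 2) * (m%:R / n%:R) * (2 * sigma))
        * (f x - f xstar)
      + (sigma / 2 / 2 * (m%:R * eta ^+ 2) + (L - sigma / 2) * eta ^+ 2)).
Proof. by case: m => [//|m] n0 _; apply: avg_step. Qed.

Unset Implicit Arguments.
Unset Strict Implicit.

Theorem theorem1 (R : realType) (n m : nat) (sigma L eta : R)
  (f : 'rV[R]_n -> R^o) (xstar x0 : 'rV[R]_n)
  (ls : 'rV[R]_n -> 'rV[R]_n -> R -> R) :
  (1 <= n)%N -> (1 <= m)%N -> (m <= n)%N -> 0 < eta ->
  0 < sigma -> sigma <= L ->
  F_class sigma L f ->
  (forall y, f xstar <= f y) ->
  line_search_accurate f ls ->
  let gamma := gamma_const sigma L in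
  let eps := eps_const n m sigma L eta in
  let T0 := Num.ceil (n%:R / (m%:R * gamma) *
              ln ((f x0 - f xstar) * (1 + n%:R / (m%:R * gamma)) / eps)) in
  forall T : nat, T0 <= T%:Z ->
    @bcd_expected_gap R n m f ls eta x0 xstar T <= eps.
Proof.
move=> n1 m1 mn e0 s0 sL hF hopt hls gamma eps T0 T hT.
have L0 : 0 < L by apply: lt_le_trans sL.
set M := L - sigma / 2.
have M0 : 0 < M by rewrite /M; lra.
set kap := sigma / 2 / (128 * M ^+ 2).
set rho := kap * (m%:R / n%:R) * (2 * sigma).
set N := sigma / 2 / 2 * (m%:R * eta ^+ 2) + M * eta ^+ 2.
have n0 : (0 < n%:R :> R) by rewrite ltr0n.
have m0 : (0 < m%:R :> R) by rewrite ltr0n.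
have mn' : (m%:R <= n%:R :> R) by rewrite ler_nat.
have [g0 gb] := gamma_bound s0 sL; rewrite -/gamma -/M in g0 gb.
have rhoE : rho = m%:R / n%:R * (sigma ^+ 2 / (128 * M ^+ 2)).
  by rewrite /rho /kap; field; rewrite !gt_eqF.
set K := n%:R / (m%:R * gamma).
have K0 : 0 < K by rewrite /K divr_gt0 // mulr_gt0.
set r := m%:R * gamma / n%:R.
have rK : r * K = 1 by rewrite /r /K; field; rewrite !gt_eqF.
have r0 : 0 < r by rewrite /r divr_gt0 // mulr_gt0.
have rrho : r <= rho.
  rewrite rhoE /r mulrAC ler_wpM2l // divr_ge0 // ltW //.
have sM : sigma <= 2 * M by rewrite /M; lra.
have rho1 : rho <= 1.
  rewrite rhoE.
  have h1 : m%:R / n%:R <= 1 :> R by rewrite ler_pdivrMr // mul1r.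
  have h2 : sigma ^+ 2 / (128 * M ^+ 2) <= 1.
    rewrite ler_pdivrMr ?mulr_gt0 ?exprn_gt0 // mul1r.
    have : sigma ^+ 2 <= (2 * M) ^+ 2 by rewrite lerXn2r // nnegrE; lra.
    have e4 : (2 : R) ^+ 2 = 4 by rewrite expr2; lra.
    rewrite exprMn e4 => h; have := exprn_ge0 2 (ltW M0); lra.
  have := ler_pM (divr_ge0 (ltW m0) (ltW n0)) _ h1 h2.
  rewrite mul1r; apply; rewrite divr_ge0 ?mulr_ge0 ?exprn_ge0 //; lra.
have rho0 : 0 < rho by apply: lt_le_trans rrho.
have q0 : 0 <= 1 - rho by lra.
have N0 : 0 <= N by rewrite /N addr_ge0 ?mulr_ge0 ?divr_ge0 ?exprn_ge0 //; lra.
have hb := Ssum_bound (fun x => avg_step' xstar x n1 m1 s0 sL e0 hF hls) q0 N0 T x0.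
rewrite -/M -/kap -/rho -/N in hb.
set Z := 8 * n%:R * L ^+ 2 / sigma * eta ^+ 2.
have epsE : eps = Z * (1 + K) by rewrite /eps /eps_const /Z -/gamma -/K; ring.
have Z0 : 0 < Z by rewrite /Z mulr_gt0 ?exprn_gt0 // divr_gt0 ?mulr_gt0 ?exprn_gt0.
have eps0 : 0 < eps by rewrite epsE mulr_gt0 //; lra.
have NZ : N <= Z.
  have h1 : N <= L * m%:R * eta ^+ 2 + L * eta ^+ 2.
    rewrite /N /M; have hE := exprn_ge0 2 (ltW e0).
    have hme := mulr_ge0 (ltW m0) hE.
    have h4 : 0 <= (L - sigma / 2 / 2) * (m%:R * eta ^+ 2) by rewrite mulr_ge0 //; lra.
    have h5 : 0 <= sigma / 2 * eta ^+ 2 by rewrite mulr_ge0 //; lra.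
    have -> : L * m%:R * eta ^+ 2 = L * (m%:R * eta ^+ 2) by ring.
    lra.
  apply: (le_trans h1).
  have h2 : L <= L ^+ 2 / sigma by rewrite ler_pdivlMr // expr2 ler_wpM2l // ltW.
  have h3 : L * m%:R * eta ^+ 2 + L * eta ^+ 2 <= 2 * n%:R * L * eta ^+ 2.
    have : 1 <= n%:R :> R by rewrite ler1n.
    have := exprn_ge0 2 (ltW e0); nra.
  apply: (le_trans h3); rewrite /Z.
  have : 2 * n%:R * L <= 8 * n%:R * (L ^+ 2 / sigma).
    have := mulr_ge0 (ltW n0) (ltW L0); nra.
  have := exprn_gt0 2 e0; rewrite !mulrA; nra.
have gsum : N * \sum_(j < T) (1 - rho) ^+ j <= Z * K.
  have := geom_bound T rho0 rho1.
  set S := \sum_(j < T) _ => hS.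
  have S0 : 0 <= S by rewrite /S sumr_ge0 // => j _; rewrite exprn_ge0.
  have hS' : S <= rho^-1.
    have -> : S = rho^-1 * (rho * S) by field; rewrite gt_eqF.
    by rewrite -[X in _ <= X]mulr1 ler_wpM2l // invr_ge0 ltW.
  have : N * S <= N / rho by rewrite ler_wpM2l.
  move=> h; apply: (le_trans h).
  have : N / rho <= N / r by rewrite ler_wpM2l // lef_pV2 ?posrE.
  move=> h'; apply: (le_trans h').
  have -> : N / r = N * K by rewrite -[r^-1]mul1r -rK mulrAC mulfV ?gt_eqF // mul1r.
  by rewrite ler_wpM2r // ltW.
set F0 := f x0 - f xstar.
have F00 : 0 <= F0 by rewrite /F0 subr_ge0.
have tail : (1 - rho) ^+ T * F0 <= Z.
  have [F0z|F0p] := eqVneq F0 0; first by rewrite F0z mulr0 ltW.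
  have F0p' : 0 < F0 by rewrite lt_def F0p F00.
  set X := F0 * (1 + K) / eps.
  have X0 : 0 < X by rewrite /X divr_gt0 // mulr_gt0 //; lra.
  have hT' : K * ln X <= T%:R.
    apply: le_trans (ceil_ge _) _.
    by rewrite -[T%:R]/((T%:Z)%:~R) ler_int.
  have hlr : ln X <= r * T%:R.
    have e : ln X = r * (K * ln X) by rewrite mulrA rK mul1r.
    by rewrite {1}e ler_pM2l.
  have h1 : (1 - rho) ^+ T <= (1 - r) ^+ T by rewrite lerXn2r // ?nnegrE; lra.
  have h2 : (1 - r) ^+ T <= expR (- r) ^+ T.
    rewrite lerXn2r ?nnegrE ?expR_ge0 //; first lra.
    exact: expR_ge1Dx.
  have h3 : expR (- r) ^+ T <= X^-1.
    rewrite -expRM_natr -(lnK X0) -expRN ler_expR mulNr lerN2 //.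
  have : (1 - rho) ^+ T * F0 <= X^-1 * F0.
    by rewrite ler_wpM2r // (le_trans h1 (le_trans h2 h3)).
  have -> : X^-1 * F0 = Z by rewrite /X epsE; field; rewrite !gt_eqF //; lra.
  done.
rewrite /bcd_expected_gap.
set C := (#|@sample_space n m T|%:R : R).
have C0 : 0 <= C by rewrite /C ler0n.
have [Cz|Cp] := eqVneq C 0; first by rewrite Cz invr0 mul0r ltW.
have Cp' : 0 < C by rewrite lt_def Cp C0.
change (C^-1 * Ssum m f ls eta xstar T x0 <= eps).
rewrite ler_pdivrMl // epsE.
apply: (le_trans hb); rewrite ler_wpM2l // -/F0.
have -> : Z * (1 + K) = Z + Z * K by ring.
by apply: lerD.
Qed.
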